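(* There exists $\delta\in(0,1)$, independent of $c\in(c_0,c_s)$, such that for every $c\in(c_0,c_s)$, $$\max_{\mathbb R}\eta_c=\eta_c(0)\le 1-\delta^2\frac{c^2}{c_s^2},$$ equivalently $\min_{\mathbb R}\sqrt{1-\eta_c}=\sqrt{1-\eta_c(0)}\ge\delta\,c/c_s$.
   Context: Standing assumptions: $f\in\mathcal C^3(\mathbb R_+)$ with $f(1)=0$ and $f'(1)<0$; $c_s:=\sqrt{-2f'(1)}$; $F(r):=\int_r^1 f(\rho)\,d\rho$. Assume (H1) $\frac{c_s^2}{4}(1-\rho)^2\le F(\rho)$ for all $\rho$; (H2) there exist $M\ge 0$, $q\in[2,\infty)$ with $F(\rho)\le M|1-\rho|^q$ for all $\rho\ge 2$; (H3) $f''(1)+3f'(1)\neq 0$. For $c\in(c_0,c_s)$ (with $c_0\in(0,c_s)$ the threshold of existence), $Q_c=(\eta_c,v_c)\in H^1\times L^2$, $\sup\eta_c<1$, denotes the even non-constant solution (unique up to translation) of $\frac c2\eta=v(1-\eta)$, $cv=f(1-\eta)-v^2-\frac{\eta''}{2(1-\eta)}-\frac{(\eta')^2}{4(1-\eta)^2}$; $\eta_c$ attains its maximum at $0$. *)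

(* Defs.v *)
From Stdlib Require Import Reals.
From Coquelicot Require Import Coquelicot.
Open Scope R_scope.

Definition C3_Rplus (f : R -> R) : Prop :=
  (forall x, 0 < x ->
     (forall k, (k <= 3)%nat -> ex_derive_n f k x) /\
     continuous (Derive_n f 3) x) /\
  filterlim f (at_right 0) (locally (f 0)).

Definition cs (f : R -> R) : R := sqrt (- 2 * Derive f 1).

Definition Fpot (f : R -> R) (r : R) : R := RInt f r 1.

Definition standing_assumptions (f : R -> R) : Prop :=
  C3_Rplus f /\ f 1 = 0 /\ Derive f 1 < 0 /\
  (forall rho, 0 <= rho -> (cs f) ^ 2 / 4 * (1 - rho) ^ 2 <= Fpot f rho) /\
  (exists M q, 0 <= M /\ 2 <= q /\
     forall rho, 2 <= rho -> Fpot f rho <= M * Rpower (Rabs (1 - rho)) q) /\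
  Derive_n f 2 1 + 3 * Derive f 1 <> 0.

Definition L2 (u : R -> R) : Prop :=
  ex_RInt_gen (fun x => (u x) ^ 2) (Rbar_locally m_infty) (Rbar_locally p_infty).

(** (eta, v) is an even non-constant travelling-wave solution of speed c:
    eta in H^1 (classical C^2 function with eta, eta' in L^2), v in L^2,
    sup eta < 1, and the system
       c/2 eta = v (1 - eta),
       c v = f(1-eta) - v^2 - eta''/(2(1-eta)) - (eta')^2/(4(1-eta)^2). *)
Definition TW_solution (f : R -> R) (c : R) (eta v : R -> R) : Prop :=
  (forall x, ex_derive eta x) /\
  (forall x, ex_derive (Derive eta) x) /\
  (forall x, continuous (Derive (Derive eta)) x) /\
  L2 eta /\ L2 (Derive eta) /\ L2 v /\
  (exists m, m < 1 /\ forall x, eta x <= m) /\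
  (forall x, eta (- x) = eta x) /\ (forall x, v (- x) = v x) /\
  (exists x y, eta x <> eta y) /\
  (forall x, c / 2 * eta x = v x * (1 - eta x)) /\
  (forall x, c * v x = f (1 - eta x) - (v x) ^ 2
                       - Derive (Derive eta) x / (2 * (1 - eta x))
                       - (Derive eta x) ^ 2 / (4 * (1 - eta x) ^ 2)).

Definition has_TW (f : R -> R) (c : R) : Prop :=
  exists eta v, TW_solution f c eta v.

Definition c0 (f : R -> R) : Rbar :=
  Glb_Rbar (fun c => 0 < c < cs f /\ has_TW f c).

(* Main.v *)
Require Import Defs.
From Stdlib Require Import Reals Lra Lia Classical.
From Coquelicot Require Import Coquelicot.
Open Scope R_scope.

Lemma L2_tail (g : R -> R) :
  ex_RInt_gen g (Rbar_locally m_infty) (Rbar_locally p_infty) ->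
  (forall a b, ex_RInt g a b) ->
  forall eps, 0 < eps -> exists Rr, forall a b, Rr <= a -> Rr <= b -> Rabs (RInt g a b) < eps.
Proof.
  intros [l Hl] Hex eps Heps.
  assert (Hb : locally l (ball l (mkposreal _ (ltac:(lra) : 0 < eps/2)))) by apply locally_ball.
  specialize (Hl _ Hb). destruct Hl as [Q R0 [M HQ] [M' HR] Hp].
  exists (Rabs M' + 1). intros a b Ha Hb'.
  destruct (Hp (M - 1) a) as [y1 [Hy1 Hb1]]. apply HQ; lra. apply HR; pose proof (Rle_abs M'); lra.
  destruct (Hp (M - 1) b) as [y2 [Hy2 Hb2]]. apply HQ; lra. apply HR; pose proof (Rle_abs M'); lra.
  simpl in *.
  assert (E : RInt g a b = RInt g (M-1) b - RInt g (M-1) a).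
  { rewrite <- (RInt_Chasles g (M-1) a b) by auto. unfold plus; simpl. change (@RInt R_CompleteNormedModule g (M-1) b) with (RInt g (M-1) b). lra. }
  rewrite E, (is_RInt_unique _ _ _ _ Hy1), (is_RInt_unique _ _ _ _ Hy2).
  unfold ball in Hb1, Hb2; simpl in Hb1, Hb2. unfold AbsRing_ball, abs, minus, plus, opp in Hb1, Hb2; simpl in Hb1, Hb2.
  apply Rabs_lt_between in Hb1. apply Rabs_lt_between in Hb2.
  apply Rabs_lt_between. lra.
Qed.
Ltac clean_eta := repeat match goal with |- context [fun y : R => ?g y] => change (fun y : R => g y) with g end.

Lemma sq_cont (w : R -> R) z : ex_derive w z -> continuous (fun x => (w x)^2) z.
Proof. intros H. apply (@ex_derive_continuous R_AbsRing R_NormedModule). auto_derive. auto. Qed.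

Lemma sq_exRInt (w : R -> R) a b : (forall x, ex_derive w x) -> ex_RInt (fun x => (w x)^2) a b.
Proof. intros H. apply (@ex_RInt_continuous R_CompleteNormedModule). intros; apply sq_cont; auto. Qed.

Lemma RInt_lb_const (g : R -> R) a b k : a <= b -> ex_RInt g a b -> (forall x, a <= x <= b -> k <= g x) ->
  k * (b - a) <= RInt g a b.
Proof.
  intros Hab Hex Hk.
  replace (k * (b-a)) with (RInt (fun _ => k) a b).
  2:{ rewrite RInt_const. unfold scal; simpl; unfold mult; simpl. ring. }
  apply RInt_le; auto. apply ex_RInt_const. intros; apply Hk; lra.
Qed.

Lemma cont_eps (w : R -> R) s : continuous w s ->
  forall eps, 0 < eps -> exists d, 0 < d /\ forall t, Rabs (t - s) < d -> Rabs (w t - w s) < eps.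
Proof.
  intros Hc eps He.
  pose proof (proj1 (filterlim_locally w (w s)) Hc (mkposreal eps He)) as H.
  destruct H as [d Hd]. exists d. split. apply cond_pos.
  intros t Ht. apply (Hd t). exact Ht.
Qed.

Lemma der_cont (w : R -> R) s : ex_derive w s -> continuous w s.
Proof. intros H. apply (@ex_derive_continuous R_AbsRing R_NormedModule). exact H. Qed.

Lemma decay (w : R -> R) :
  (forall x, ex_derive w x) -> (forall x, ex_derive (Derive w) x) ->
  ex_RInt_gen (fun x => (w x)^2) (Rbar_locally m_infty) (Rbar_locally p_infty) ->
  ex_RInt_gen (fun x => (Derive w x)^2) (Rbar_locally m_infty) (Rbar_locally p_infty) ->
  forall eps, 0 < eps -> exists Rr, forall t, Rr <= t -> Rabs (w t) < eps.
Proof.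
  intros Hd Hd2 H1 H2 eps Heps.
  set (d := eps^2/3).
  assert (Hdp : 0 < d) by (unfold d; nra).
  destruct (L2_tail _ H1 (fun a b => sq_exRInt w a b Hd) d Hdp) as [R1 HR1].
  destruct (L2_tail _ H2 (fun a b => sq_exRInt (Derive w) a b Hd2) d Hdp) as [R2 HR2].
  exists (Rmax R1 R2). intros t Ht.
  pose proof (Rmax_l R1 R2). pose proof (Rmax_r R1 R2).
  assert (Hs : exists s, t <= s <= t+1 /\ (w s)^2 < d).
  { apply Classical_Prop.NNPP; intro Hn.
    assert (Hge : forall s, t <= s <= t+1 -> d <= (w s)^2).
    { intros s Hs. apply Rnot_lt_le. intro Hl. apply Hn. exists s; auto. }
    pose proof (RInt_lb_const _ t (t+1) d ltac:(lra) (sq_exRInt w _ _ Hd) Hge).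
    specialize (HR1 t (t+1) ltac:(lra) ltac:(lra)).
    apply Rabs_lt_between in HR1. lra. }
  destruct Hs as [s [Hts Hws]].
  assert (Hint : RInt (fun x => 2 * w x * Derive w x) t s = (w s)^2 - (w t)^2).
  { rewrite <- (RInt_Derive (fun x => (w x)^2)).
    - apply RInt_ext. intros x _. symmetry. apply is_derive_unique. auto_derive. auto. clean_eta. ring.
    - intros; auto_derive; auto.
    - intros x _. apply (continuous_ext (fun x => 2 * w x * Derive w x)).
      + intros y. symmetry. apply is_derive_unique. auto_derive. auto. clean_eta. ring.
      + apply (@ex_derive_continuous R_AbsRing R_NormedModule). auto_derive. auto. }
  assert (Hexp : ex_RInt (fun x => 2 * w x * Derive w x) t s).
  { apply (@ex_RInt_continuous R_CompleteNormedModule). intros. apply (@ex_derive_continuous R_AbsRing R_NormedModule). auto_derive. auto. }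
  pose proof (abs_RInt_le _ t s ltac:(lra) Hexp) as Habs.
  assert (Hle : RInt (fun x => Rabs (2 * w x * Derive w x)) t s <= RInt (fun x => (w x)^2 + (Derive w x)^2) t s).
  { apply RInt_le. lra.
    - apply (@ex_RInt_continuous R_CompleteNormedModule). intros. apply continuous_comp.
      apply (@ex_derive_continuous R_AbsRing R_NormedModule). auto_derive. auto.
      apply continuous_Rabs.
    - apply (@ex_RInt_continuous R_CompleteNormedModule). intros. apply (@ex_derive_continuous R_AbsRing R_NormedModule). auto_derive. auto.
    - intros x _. pose proof (Rabs_pos (w x)). pose proof (Rabs_pos (Derive w x)).
      rewrite !Rabs_mult. rewrite (Rabs_right 2) by lra.
      rewrite <- (pow2_abs (w x)), <- (pow2_abs (Derive w x)).
      pose proof (pow2_ge_0 (Rabs (w x) - Rabs (Derive w x))). nra. }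
  assert (Hsplit : RInt (fun x => (w x)^2 + (Derive w x)^2) t s = RInt (fun x => (w x)^2) t s + RInt (fun x => (Derive w x)^2) t s).
  { apply (RInt_plus (V := R_CompleteNormedModule)); apply sq_exRInt; auto. }
  specialize (HR1 t s ltac:(lra) ltac:(lra)). specialize (HR2 t s ltac:(lra) ltac:(lra)).
  apply Rabs_lt_between in HR1. apply Rabs_lt_between in HR2.
  rewrite Hint in Habs.
  assert ((w t)^2 < eps^2).
  { apply Rabs_le_between in Habs. unfold d in *. lra. }
  apply Rsqr_lt_abs_0 in H3 || idtac.
  rewrite <- (Rabs_right eps) by lra.
  apply Rsqr_lt_abs_0. unfold Rsqr. nra.
Qed.

Lemma lub_zero (w : R -> R) z t0 t1 s : (forall x, ex_derive w x) ->
  is_lub (fun t => t0 <= t <= t1 /\ w t = z) s -> w t0 = z -> t0 <= t1 -> w s = z /\ t0 <= s <= t1.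
Proof.
  intros Hd [Hub Hlub] H0 H01.
  assert (t0 <= s) by (apply Hub; split; [lra|auto]).
  assert (s <= t1) by (apply Hlub; intros x [Hx _]; lra).
  split; [|lra].
  apply NNPP; intro Hn.
  assert (Hp : 0 < Rabs (w s - z)) by (apply Rabs_pos_lt; intro; apply Hn; lra).
  destruct (cont_eps w s (der_cont w s (Hd s)) _ Hp) as [d [Hdp Hd']].
  assert (Hex : exists e, t0 <= e <= t1 /\ w e = z /\ s - d < e).
  { apply NNPP; intro Hne.
    assert (s <= s - d). { apply Hlub. intros x [Hx Hwx]. apply Rnot_lt_le. intro. apply Hne. exists x. auto. }
    lra. }
  destruct Hex as [e [He [Hwe Hse]]].
  assert (e <= s) by (apply Hub; auto).
  specialize (Hd' e ltac:(rewrite Rabs_left1 by lra; lra)).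
  rewrite Hwe in Hd'. rewrite <- Rabs_Ropp in Hd'. replace (- (z - w s)) with (w s - z) in Hd' by ring. lra.
Qed.

Lemma gronwall_right (w : R -> R) z K rho : 0 < rho -> 0 <= K -> (forall x, ex_derive w x) ->
  (forall t, Rabs (w t - z) <= rho -> (Derive w t)^2 <= K * (w t - z)^2) ->
  forall t0 t1, w t0 = z -> t0 <= t1 -> w t1 = z.
Proof.
  intros Hr HK Hd Hb t0 t1 H0 H01.
  apply NNPP; intro Hn.
  set (E := fun t => t0 <= t <= t1 /\ w t = z).
  assert (HE : bound E) by (exists t1; intros x [Hx _]; lra).
  destruct (completeness E HE (ex_intro _ t0 (conj (conj (Rle_refl _) H01) H0))) as [s Hs].
  destruct (lub_zero w z t0 t1 s Hd Hs H0 H01) as [Hws Hst].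
  assert (s < t1) by (destruct (Req_dec s t1); [subst; congruence| lra]).
  destruct (cont_eps w s (der_cont w s (Hd s)) rho Hr) as [d [Hdp Hd']].
  set (b := Rmin (s + d/2) t1).
  assert (Hb1 : s < b) by (unfold b; apply Rmin_case; lra).
  assert (Hb2 : b <= t1) by (unfold b; apply Rmin_r).
  assert (Hb3 : b <= s + d/2) by (unfold b; apply Rmin_l).
  set (h := fun t => exp (-(1+K) * t) * (w t - z)^2).
  set (h' := fun t => exp (-(1+K) * t) * (2 * (w t - z) * Derive w t - (1+K) * (w t - z)^2)).
  destruct (MVT_cor2 h h' s b Hb1) as [xi [Hxi Hxir]].
  { intros c Hc. apply is_derive_Reals. unfold h, h'. auto_derive. auto. clean_eta. ring. }
  assert (Hwb : w b = z).
  { assert (Hxib : Rabs (w xi - z) <= rho).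
    { rewrite <- Hws. left. apply Hd'. rewrite Rabs_right by lra. lra. }
    pose proof (Hb xi Hxib).
    assert (h' xi <= 0).
    { unfold h'. pose proof (exp_pos (-(1+K)*xi)).
      pose proof (pow2_ge_0 (w xi - z - Derive w xi)).
      assert (2 * (w xi - z) * Derive w xi - (1 + K) * (w xi - z) ^ 2 <= 0) by nra.
      nra. }
    assert (h s = 0) by (unfold h; rewrite Hws; ring).
    assert (h b <= 0) by nra.
    unfold h in H4. pose proof (exp_pos (-(1+K)*b)).
    assert ((w b - z)^2 <= 0) by nra.
    nra. }
  assert (b <= s) by (apply Hs; split; [lra | auto]).
  lra.
Qed.

Lemma f_der f : standing_assumptions f -> forall x, 0 < x -> ex_derive f x.
Proof. intros [[H _] _] x Hx. exact (proj1 (H x Hx) 1%nat ltac:(lia)). Qed.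

Lemma fp_der f : standing_assumptions f -> forall x, 0 < x -> ex_derive (Derive f) x.
Proof. intros [[H _] _] x Hx. exact (proj1 (H x Hx) 2%nat ltac:(lia)). Qed.

Lemma f_cont f : standing_assumptions f -> forall x, 0 < x -> continuous f x.
Proof. intros Hs x Hx. apply der_cont. apply f_der; auto. Qed.

Lemma fp_cont f : standing_assumptions f -> forall x, 0 < x -> continuous (Derive f) x.
Proof. intros Hs x Hx. apply der_cont. apply fp_der; auto. Qed.

Lemma f_exRInt f : standing_assumptions f -> forall a b, 0 < a -> 0 < b -> ex_RInt f a b.
Proof.
  intros Hs a b Ha Hb. apply (@ex_RInt_continuous R_CompleteNormedModule).
  intros z Hz. apply f_cont; auto. pose proof (Rmin_glb_lt a b 0 Ha Hb) as H. lra.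
Qed.

Lemma F_der f : standing_assumptions f -> forall r, 0 < r -> is_derive (Fpot f) r (- f r).
Proof.
  intros Hs r Hr. unfold Fpot.
  apply (is_derive_RInt' (V := R_NormedModule) f (fun a => RInt f a 1) r 1).
  - exists (mkposreal (r/2) ltac:(lra)). intros y Hy.
    apply (RInt_correct (V := R_CompleteNormedModule)). apply f_exRInt; auto; try lra.
    unfold ball in Hy; simpl in Hy; unfold AbsRing_ball, abs, minus, plus, opp in Hy; simpl in Hy.
    apply Rabs_lt_between in Hy. lra.
  - apply f_cont; auto.
Qed.

Lemma F_cont f : standing_assumptions f -> forall r, 0 < r -> continuous (Fpot f) r.
Proof. intros Hs r Hr. apply der_cont. eexists. apply F_der; auto. Qed.

Lemma F1 f : Fpot f 1 = 0.
Proof. unfold Fpot. apply (RInt_point (V := R_CompleteNormedModule)). Qed.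

Lemma cont_bound (g : R -> R) a b : a <= b -> (forall x, a <= x <= b -> continuous g x) ->
  exists B, forall x, a <= x <= b -> Rabs (g x) <= B.
Proof.
  intros Hab Hc.
  destruct (continuity_ab_maj (fun x => Rabs (g x)) a b Hab) as [M [HM _]].
  { intros x Hx. apply continuity_pt_filterlim. apply (continuous_comp g Rabs). auto. apply continuous_Rabs. }
  exists (Rabs (g M)). auto.
Qed.

Lemma f_bound01 f : standing_assumptions f -> exists B, forall x, 0 < x <= 1 -> Rabs (f x) <= B.
Proof.
  intros Hs. pose proof Hs as Hs0. destruct Hs0 as [[_ Hlim] _].
  pose proof (proj1 (filterlim_locally f (f 0)) Hlim (mkposreal 1 Rlt_0_1)) as H.
  destruct H as [e He]. simpl in He.
  set (e' := Rmin (e/2) 1).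
  assert (0 < e') by (unfold e'; apply Rmin_case; pose proof (cond_pos e); lra).
  assert (e' <= 1) by apply Rmin_r. assert (e' <= e/2) by apply Rmin_l.
  destruct (cont_bound f e' 1 ltac:(lra)) as [B HB].
  { intros x Hx. apply f_cont; auto; lra. }
  exists (Rmax B (Rabs (f 0) + 1)). intros x Hx.
  destruct (Rle_lt_dec e' x).
  - eapply Rle_trans; [apply HB; lra| apply Rmax_l].
  - assert (Hb : ball 0 e x).
    { unfold ball; simpl; unfold AbsRing_ball, abs, minus, plus, opp; simpl.
      rewrite Ropp_0, Rplus_0_r, Rabs_right by lra. pose proof (cond_pos e). lra. }
    specialize (He x Hb ltac:(lra)).
    unfold ball in He; simpl in He; unfold AbsRing_ball, abs, minus, plus, opp in He; simpl in He.
    eapply Rle_trans; [| apply Rmax_r].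
    pose proof (Rabs_triang_inv (f x) (f 0)). unfold Rminus in *. lra.
Qed.

Lemma F_bound f : standing_assumptions f -> exists B, 0 < B /\ forall r, 0 < r <= 1 -> Fpot f r <= B.
Proof.
  intros Hs. destruct (f_bound01 f Hs) as [B HB].
  exists (Rabs B + 1). split. pose proof (Rabs_pos B); lra.
  intros r Hr. unfold Fpot.
  eapply Rle_trans with (RInt (fun _ => Rabs B) r 1).
  - apply RInt_le. lra. apply f_exRInt; auto; lra. apply ex_RInt_const.
    intros x Hx. pose proof (HB x ltac:(lra)). pose proof (Rle_abs B). pose proof (Rle_abs (f x)). lra.
  - rewrite RInt_const. unfold scal; simpl; unfold mult; simpl. pose proof (Rabs_pos B). nra.
Qed.

Lemma mvt_bound (g g' : R -> R) z s B :
  (forall x, Rmin z s <= x <= Rmax z s -> is_derive g x (g' x)) ->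
  (forall x, Rmin z s <= x <= Rmax z s -> Rabs (g' x) <= B) ->
  Rabs (g s - g z) <= B * Rabs (s - z).
Proof.
  intros Hd Hb.
  destruct (Rtotal_order z s) as [Hlt|[Heq|Hgt]].
  - assert (E1 : Rmin z s = z) by (apply Rmin_left; lra). assert (E2 : Rmax z s = s) by (apply Rmax_right; lra).
    rewrite E1, E2 in *.
    destruct (MVT_cor2 g g' z s Hlt) as [c [Hc Hcr]].
    { intros c Hc. apply is_derive_Reals. apply Hd. lra. }
    rewrite Hc, Rabs_mult. apply Rmult_le_compat_r. apply Rabs_pos. apply Hb. lra.
  - subst. unfold Rminus. rewrite !Rplus_opp_r, Rabs_R0. pose proof (Hb s). rewrite Rmin_left, Rmax_left in H by lra.
    specialize (H ltac:(lra)). pose proof (Rabs_pos (g' s)). lra.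
  - assert (E1 : Rmin z s = s) by (apply Rmin_right; lra). assert (E2 : Rmax z s = z) by (apply Rmax_left; lra).
    rewrite E1, E2 in *.
    destruct (MVT_cor2 g g' s z Hgt) as [c [Hc Hcr]].
    { intros c Hc. apply is_derive_Reals. apply Hd. lra. }
    rewrite <- Rabs_Ropp, <- (Rabs_Ropp (s - z)). replace (- (g s - g z)) with (g z - g s) by ring.
    replace (- (s - z)) with (z - s) by ring.
    rewrite Hc, Rabs_mult. apply Rmult_le_compat_r. apply Rabs_pos. apply Hb. lra.
Qed.

Definition Gf f c s := 4 * (1 - s) * Fpot f (1 - s) - c^2 * s^2.
Definition Gp f c s := -4 * Fpot f (1 - s) + 4 * (1 - s) * f (1 - s) - 2 * c^2 * s.
Definition Gpp f c s := -8 * f (1 - s) - 4 * (1 - s) * Derive f (1 - s) - 2 * c^2.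

Lemma Gf_der f c : standing_assumptions f -> forall s, s < 1 -> is_derive (Gf f c) s (Gp f c s).
Proof.
  intros Hs s H1. unfold Gf, Gp.
  pose proof (F_der f Hs (1 - s) ltac:(lra)) as HF.
  pose proof (f_der f Hs (1 - s) ltac:(lra)) as Hf.
  auto_derive; [exists (- f (1-s)); exact HF |].
  clean_eta. replace (1 + - s) with (1 - s) by ring. rewrite (is_derive_unique _ _ _ HF). ring.
Qed.

Lemma Gp_der f c : standing_assumptions f -> forall s, s < 1 -> is_derive (Gp f c) s (Gpp f c s).
Proof.
  intros Hs s H1. unfold Gp, Gpp.
  pose proof (F_der f Hs (1 - s) ltac:(lra)) as HF.
  pose proof (f_der f Hs (1 - s) ltac:(lra)) as Hf.
  auto_derive; [split; [exists (- f (1-s)); exact HF | split; [exact Hf| exact I]] |].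
  clean_eta. replace (1 + - s) with (1 - s) by ring. rewrite (is_derive_unique _ _ _ HF). ring.
Qed.

Lemma Gpp_cont f c : standing_assumptions f -> forall s, s < 1 -> continuous (Gpp f c) s.
Proof.
  intros Hs s H1. apply der_cont. unfold Gpp.
  pose proof (fp_der f Hs (1 - s) ltac:(lra)). pose proof (f_der f Hs (1 - s) ltac:(lra)).
  auto_derive. auto.
Qed.

Lemma between_abs z s x : Rmin z s <= x <= Rmax z s -> Rabs (x - z) <= Rabs (s - z).
Proof.
  intros [H1 H2]. unfold Rmin, Rmax in *. destruct (Rle_dec z s).
  - rewrite !Rabs_right by lra. lra.
  - rewrite !Rabs_left1 by lra. lra.
Qed.

Lemma G_quad f c z : standing_assumptions f -> z < 1 -> Gf f c z = 0 -> Gp f c z = 0 ->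
  exists rho K, 0 < rho /\ 0 <= K /\ forall s, Rabs (s - z) <= rho -> Gf f c s <= K * (s - z)^2.
Proof.
  intros Hs Hz HG HGp.
  set (rho := (1 - z)/2).
  destruct (cont_bound (Gpp f c) (z - rho) (z + rho)) as [B HB].
  { unfold rho; lra. }
  { intros x Hx. apply Gpp_cont; auto. unfold rho in Hx; lra. }
  exists rho, (Rabs B). split. unfold rho; lra. split. apply Rabs_pos.
  intros s Hsz.
  assert (Hin : forall x, Rmin z s <= x <= Rmax z s -> z - rho <= x <= z + rho /\ x < 1).
  { intros x Hx. pose proof (between_abs z s x Hx). apply Rabs_le_between in H. unfold rho in *. lra. }
  assert (Hgp : forall x, Rmin z s <= x <= Rmax z s -> Rabs (Gp f c x) <= Rabs B * Rabs (s - z)).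
  { intros x Hx.
    assert (Hxz : Rmin z x <= Rmax z x -> True) by auto.
    pose proof (mvt_bound (Gp f c) (Gpp f c) z x (Rabs B)) as Hm.
    rewrite HGp, Rminus_0_r in Hm.
    eapply Rle_trans. apply Hm.
    - intros y Hy. apply Gp_der; auto.
      assert (Hyz : Rabs (y - z) <= rho) by (eapply Rle_trans; [apply (between_abs z x y Hy)|]; eapply Rle_trans; [apply (between_abs z s x Hx)| exact Hsz]).
      apply Rabs_le_between in Hyz. unfold rho in *. lra.
    - intros y Hy.
      assert (Hyz : Rabs (y - z) <= rho) by (eapply Rle_trans; [apply (between_abs z x y Hy)|]; eapply Rle_trans; [apply (between_abs z s x Hx)| exact Hsz]).
      eapply Rle_trans. apply HB. apply Rabs_le_between in Hyz. lra.
      apply Rle_abs.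
    - apply Rmult_le_compat_l. apply Rabs_pos. apply between_abs; auto. }
  pose proof (mvt_bound (Gf f c) (Gp f c) z s (Rabs B * Rabs (s - z))) as Hm.
  rewrite HG, Rminus_0_r in Hm.
  assert (Rabs (Gf f c s) <= Rabs B * Rabs (s - z) * Rabs (s - z)).
  { apply Hm. intros x Hx. apply Gf_der; auto. apply Hin; auto. auto. }
  rewrite Rmult_assoc, <- Rabs_mult in H. rewrite Rabs_right with (r := (s-z)*(s-z)) in H by (pose proof (Rle_0_sqr (s-z)); unfold Rsqr in *; lra).
  pose proof (Rle_abs (Gf f c s)). replace ((s-z)^2) with ((s-z)*(s-z)) by ring. lra.
Qed.

Lemma eta_lt1 f c eta v : TW_solution f c eta v -> forall x, eta x < 1.
Proof.
  intros (_&_&_&_&_&_&[m [Hm Hb]]&_) x. specialize (Hb x). lra.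
Qed.

Lemma v_eq f c eta v : TW_solution f c eta v -> forall x, v x = c * eta x / (2 * (1 - eta x)).
Proof.
  intros HTW x. pose proof (eta_lt1 _ _ _ _ HTW x).
  destruct HTW as (_&_&_&_&_&_&_&_&_&_&Heq&_). specialize (Heq x).
  field_simplify_eq; [|lra]. lra.
Qed.

Lemma ode_eq f c eta v : TW_solution f c eta v -> forall x,
  Derive (Derive eta) x = 2 * (1 - eta x) * (f (1 - eta x) - (c * eta x / (2 * (1 - eta x)))^2
     - c * (c * eta x / (2 * (1 - eta x)))) - (Derive eta x)^2 / (2 * (1 - eta x)).
Proof.
  intros HTW x. pose proof (eta_lt1 _ _ _ _ HTW x). pose proof (v_eq _ _ _ _ HTW x) as Hv.
  destruct HTW as (_&_&_&_&_&_&_&_&_&_&_&Hode). specialize (Hode x).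
  rewrite Hv in Hode. rewrite Hode. field. lra.
Qed.

Definition Qf f c (eta : R -> R) x :=
  (Derive eta x)^2 / (1 - eta x) - 4 * Fpot f (1 - eta x) + c^2 * (eta x)^2 / (1 - eta x).

Lemma Qf_der f c eta v : standing_assumptions f -> TW_solution f c eta v -> forall x, is_derive (Qf f c eta) x 0.
Proof.
  intros Hs HTW x.
  pose proof (eta_lt1 _ _ _ _ HTW x) as Hl.
  pose proof (ode_eq _ _ _ _ HTW x) as Hode.
  pose proof HTW as (Hd1&Hd2&_).
  pose proof (F_der f Hs (1 - eta x) ltac:(lra)) as HF.
  unfold Qf. auto_derive.
  - repeat split; auto; try lra. exists (- f (1 - eta x)). exact HF.
  - clean_eta. replace (1 + - eta x) with (1 - eta x) by ring.
    rewrite (is_derive_unique _ _ _ HF), Hode. field. lra.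
Qed.

Lemma const_of_der (Q : R -> R) : (forall x, is_derive Q x 0) -> forall x, Q x = Q 0.
Proof.
  intros H x. destruct (Rtotal_order 0 x) as [h|[h|h]].
  - destruct (MVT_cor2 Q (fun _ => 0) 0 x h) as [c0 [Hc _]].
    intros; apply is_derive_Reals; auto. lra.
  - subst; auto.
  - destruct (MVT_cor2 Q (fun _ => 0) x 0 h) as [c0 [Hc _]].
    intros; apply is_derive_Reals; auto. lra.
Qed.

Lemma first_integral f c eta v : standing_assumptions f -> TW_solution f c eta v ->
  forall x, (Derive eta x)^2 = Gf f c (eta x) + Qf f c eta 0 * (1 - eta x).
Proof.
  intros Hs HTW x. pose proof (const_of_der _ (Qf_der f c eta v Hs HTW) x) as HQ.
  pose proof (eta_lt1 _ _ _ _ HTW x).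
  rewrite <- HQ. unfold Qf, Gf. field. lra.
Qed.

Lemma eta_decay f c eta v : TW_solution f c eta v ->
  forall eps, 0 < eps -> exists Rr, forall t, Rr <= t -> Rabs (eta t) < eps.
Proof.
  intros HTW. destruct HTW as (Hd1&Hd2&_&HL1&HL2&_).
  apply decay; auto.
Qed.

Lemma Q0_zero f c eta v : standing_assumptions f -> TW_solution f c eta v -> Qf f c eta 0 = 0.
Proof.
  intros Hs HTW.
  set (C := Qf f c eta 0).
  assert (HQ : forall t, Qf f c eta t = C) by (intro t; apply (const_of_der _ (Qf_der f c eta v Hs HTW))).
  apply NNPP; intro HC.
  assert (HCa : 0 < Rabs C) by (apply Rabs_pos_lt; auto).
  destruct (cont_eps (Fpot f) 1 (F_cont f Hs 1 Rlt_0_1) (Rabs C / 16) ltac:(lra)) as [d1 [Hd1 HF]].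
  rewrite F1 in HF.
  set (e := Rmin (Rmin (1/2) (d1/2)) (Rabs C / (16 * (c^2 + 1)))).
  assert (He1 : e <= 1/2) by (unfold e; eapply Rle_trans; [apply Rmin_l| apply Rmin_l]).
  assert (He2 : e <= d1/2) by (unfold e; eapply Rle_trans; [apply Rmin_l| apply Rmin_r]).
  assert (He3 : e <= Rabs C / (16 * (c^2 + 1))) by (unfold e; apply Rmin_r).
  assert (Hc2 : 0 < c^2 + 1) by nra.
  assert (He0 : 0 < e).
  { unfold e. repeat apply Rmin_case; try lra. apply Rdiv_lt_0_compat; lra. }
  destruct (eta_decay f c eta v HTW e He0) as [R1 HR1].
  assert (Hpt : forall t, R1 <= t -> Rabs ((Derive eta t)^2 / (1 - eta t) - C) <= 3 * Rabs C / 8).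
  { intros t Ht. specialize (HR1 t Ht). pose proof (HQ t) as Hq. unfold Qf in Hq.
    apply Rabs_lt_between in HR1.
    assert (HFt : Rabs (Fpot f (1 - eta t) - 0) < Rabs C / 16).
    { apply HF. replace (1 - eta t - 1) with (- eta t) by ring. rewrite Rabs_Ropp. apply Rabs_lt_between. lra. }
    rewrite Rminus_0_r in HFt. apply Rabs_lt_between in HFt.
    assert (Hq2 : 0 <= c^2 * (eta t)^2 / (1 - eta t) <= Rabs C / 8).
    { split. apply Rmult_le_pos. nra. left; apply Rinv_0_lt_compat; lra.
      apply Rle_trans with (2 * c^2 * (eta t)^2).
      - unfold Rdiv. assert (0 < / (1 - eta t) <= 2).
        { split. apply Rinv_0_lt_compat; lra. rewrite <- (Rinv_inv 2). apply Rinv_le_contravar; lra. }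
        assert (0 <= c^2 * (eta t)^2) by nra. nra.
      - assert ((eta t)^2 <= e * e) by nra.
        assert (e * e <= e * (Rabs C / (16 * (c^2+1)))) by nra.
        assert (2 * c^2 * (e * (Rabs C / (16 * (c^2+1)))) <= Rabs C / 8).
        { replace (2 * c^2 * (e * (Rabs C / (16 * (c^2+1))))) with ((c^2 / (c^2+1)) * (e * Rabs C / 8)) by (field; lra).
          assert (c^2 / (c^2+1) <= 1) by (apply (Rmult_le_reg_r (c^2+1)); [lra|]; replace (c^2/(c^2+1)*(c^2+1)) with (c^2) by (field; lra); lra).
          assert (0 <= e * Rabs C / 8) by (pose proof (Rabs_pos C); nra).
          assert (e * Rabs C / 8 <= Rabs C / 8) by (pose proof (Rabs_pos C); nra).
          assert (0 <= c^2 / (c^2+1)) by (apply Rdiv_le_0_compat; nra).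
          nra. }
        assert (0 <= 2 * c^2) by nra. nra. }
    apply Rabs_le_between. lra. }
  destruct (Rlt_le_dec C 0) as [HCn|HCp].
  - rewrite Rabs_left in Hpt by lra.
    specialize (Hpt R1 (Rle_refl _)). apply Rabs_le_between in Hpt.
    assert (0 <= (Derive eta R1)^2 / (1 - eta R1)).
    { pose proof (eta_lt1 _ _ _ _ HTW R1). apply Rmult_le_pos. nra. left; apply Rinv_0_lt_compat; lra. }
    lra.
  - assert (HCp' : 0 < C) by (destruct HCp; auto; congruence).
    rewrite Rabs_right in Hpt by lra.
    assert (Hlow : forall t, R1 <= t -> C / 4 <= (Derive eta t)^2).
    { intros t Ht. specialize (Hpt t Ht). apply Rabs_le_between in Hpt.
      specialize (HR1 t Ht). apply Rabs_lt_between in HR1.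
      assert (Hx : 5 * C / 8 <= (Derive eta t)^2 / (1 - eta t)) by lra.
      assert (H1e : 1/2 <= 1 - eta t) by lra.
      replace ((Derive eta t)^2) with ((Derive eta t)^2 / (1 - eta t) * (1 - eta t)) by (field; lra).
      nra. }
    destruct HTW as (Hd1'&Hd2&_&HL1&HL2&_).
    destruct (L2_tail _ HL2 (fun a b => sq_exRInt (Derive eta) a b Hd2) 1 Rlt_0_1) as [R2 HR2].
    set (a := Rmax R1 R2).
    pose proof (Rmax_l R1 R2). pose proof (Rmax_r R1 R2).
    specialize (HR2 a (a + 4 / C) ltac:(unfold a; lra) ltac:(unfold a; assert (0 < 4 / C) by (apply Rdiv_lt_0_compat; lra); lra)).
    assert (Hi : C / 4 * (a + 4 / C - a) <= RInt (fun x => (Derive eta x)^2) a (a + 4/C)).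
    { apply RInt_lb_const. assert (0 < 4 / C) by (apply Rdiv_lt_0_compat; lra); lra.
      apply sq_exRInt; auto. intros x Hx. apply Hlow. unfold a in Hx. lra. }
    replace (C / 4 * (a + 4 / C - a)) with 1 in Hi by (field; lra).
    apply Rabs_lt_between in HR2. lra.
Qed.

Lemma cs_sq f : standing_assumptions f -> (cs f)^2 = -2 * Derive f 1 /\ 0 < cs f.
Proof.
  intros Hs. pose proof Hs as (_&_&Hd&_).
  unfold cs. split. rewrite <- Rsqr_pow2. apply Rsqr_sqrt. lra. apply sqrt_lt_R0. lra.
Qed.

Lemma a_pos f c : standing_assumptions f -> 0 < c -> c < cs f -> 0 < 1 - c^2/(cs f)^2 /\ 0 <= c^2/(cs f)^2.
Proof.
  intros Hs Hc Hcc. pose proof (cs_sq f Hs) as [_ Hp].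
  split. assert (c^2/(cs f)^2 < 1). { apply (Rmult_lt_reg_r ((cs f)^2)). nra.
    replace (c^2/(cs f)^2 * (cs f)^2) with (c^2) by (field; lra). nra. } lra.
  apply Rdiv_le_0_compat; nra.
Qed.

Lemma G_eq f c eta v : standing_assumptions f -> TW_solution f c eta v ->
  forall x, (Derive eta x)^2 = Gf f c (eta x).
Proof.
  intros Hs HTW x. rewrite (first_integral f c eta v Hs HTW x), (Q0_zero f c eta v Hs HTW). ring.
Qed.

Lemma G_pos f c s : standing_assumptions f -> 0 < c -> c < cs f ->
  s <> 0 -> s < 1 - c^2 / (cs f)^2 -> 0 < Gf f c s.
Proof.
  intros Hs Hc Hcc Hs0 Hsl. pose proof (cs_sq f Hs) as [Hcs Hcsp].
  pose proof Hs as (_&_&_&H1&_).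
  assert (Hlt : c^2 < (cs f)^2) by nra.
  assert (Hs1 : s < 1). { assert (0 < c^2/(cs f)^2) by (apply Rdiv_lt_0_compat; nra). lra. }
  specialize (H1 (1 - s) ltac:(lra)). replace (1 - (1 - s)) with s in H1 by ring.
  unfold Gf.
  assert (Hk : c^2 < (cs f)^2 * (1 - s)).
  { assert (c^2 / (cs f)^2 < 1 - s) by lra.
    apply (Rmult_lt_compat_l ((cs f)^2)) in H. 2: nra.
    replace ((cs f)^2 * (c^2 / (cs f)^2)) with (c^2) in H by (field; nra). lra. }
  assert (0 < s^2) by (apply pow2_gt_0 || nra; auto).
  assert (4 * (1 - s) * ((cs f)^2/4 * s^2) <= 4 * (1 - s) * Fpot f (1 - s)).
  { apply Rmult_le_compat_l. lra. exact H1. }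
  nra.
Qed.

Lemma eta_cont f c eta v : TW_solution f c eta v -> continuity eta.
Proof.
  intros (Hd&_) x. apply continuity_pt_filterlim. apply der_cont. auto.
Qed.

Lemma etap_cont f c eta v : TW_solution f c eta v -> continuity (Derive eta).
Proof.
  intros (_&Hd&_) x. apply continuity_pt_filterlim. apply der_cont. auto.
Qed.

Lemma deriv0 f c eta v : TW_solution f c eta v -> Derive eta 0 = 0.
Proof.
  intros HTW. pose proof HTW as (Hd&_&_&_&_&_&_&Hev&_).
  assert (Derive eta 0 = Derive (fun x => eta (- x)) 0).
  { apply Derive_ext. intros; rewrite Hev; auto. }
  assert (Derive (fun x => eta (- x)) 0 = - Derive eta 0).
  { apply is_derive_unique. auto_derive. auto. clean_eta. rewrite Ropp_0. ring. }
  lra.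
Qed.

Lemma never_eq f c eta v z : standing_assumptions f -> TW_solution f c eta v ->
  z < 1 -> Gf f c z = 0 -> Gp f c z = 0 -> forall t, eta t <> z.
Proof.
  intros Hs HTW Hz HG HGp t0 Ht0.
  destruct (G_quad f c z Hs Hz HG HGp) as [rho [K [Hr [HK Hb]]]].
  pose proof HTW as (Hd&_&_&_&_&_&_&Hev&_&[x [y Hxy]]&_).
  assert (Hb' : forall t, Rabs (eta t - z) <= rho -> (Derive eta t)^2 <= K * (eta t - z)^2).
  { intros t Ht. rewrite (G_eq f c eta v Hs HTW t). apply Hb; auto. }
  assert (Hall : forall t, eta t = z).
  { intros t. destruct (Rle_dec t0 t).
    - apply (gronwall_right eta z K rho Hr HK Hd Hb' t0 t); auto.
    - rewrite <- Hev. apply (gronwall_right eta z K rho Hr HK Hd Hb' (- t0) (- t)); [rewrite Hev; auto| lra]. }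
  apply Hxy. rewrite !Hall. auto.
Qed.

Lemma G0 f c : standing_assumptions f -> Gf f c 0 = 0 /\ Gp f c 0 = 0.
Proof.
  intros (_&Hf1&_). unfold Gf, Gp. rewrite Rminus_0_r, F1, Hf1. split; ring.
Qed.

Lemma eta0_pos f c eta v : standing_assumptions f -> 0 < c -> c < cs f -> TW_solution f c eta v ->
  0 < eta 0 /\ Gf f c (eta 0) = 0.
Proof.
  intros Hs Hc Hcc HTW.
  assert (HG : Gf f c (eta 0) = 0) by (rewrite <- (G_eq f c eta v Hs HTW), (deriv0 f c eta v HTW); ring).
  split; auto.
  destruct (Rtotal_order (eta 0) 0) as [h|[h|h]]; auto.
  - pose proof (a_pos f c Hs Hc Hcc).
    pose proof (G_pos f c (eta 0) Hs Hc Hcc (Rlt_not_eq _ _ h) ltac:(lra)). lra.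
  - destruct (G0 f c Hs). exfalso. apply (never_eq f c eta v 0 Hs HTW Rlt_0_1 H H0 0 h).
Qed.

Lemma eta_pos f c eta v : standing_assumptions f -> 0 < c -> c < cs f -> TW_solution f c eta v ->
  forall t, 0 < eta t.
Proof.
  intros Hs Hc Hcc HTW t.
  destruct (eta0_pos f c eta v Hs Hc Hcc HTW) as [H0 _].
  apply Rnot_le_lt. intro Ht.
  destruct (IVT_gen eta 0 t 0 (eta_cont f c eta v HTW)) as [x [_ Hx]].
  { rewrite Rmin_right, Rmax_left by lra. lra. }
  destruct (G0 f c Hs). apply (never_eq f c eta v 0 Hs HTW Rlt_0_1 H H1 x Hx).
Qed.


Lemma eta_dpl f c eta v : TW_solution f c eta v -> forall x, derivable_pt_lim eta x (Derive eta x).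
Proof. intros (Hd&_) x. apply is_derive_Reals. apply Derive_correct. auto. Qed.

Lemma etap_dpl f c eta v : TW_solution f c eta v -> forall x, derivable_pt_lim (Derive eta) x (Derive (Derive eta) x).
Proof. intros (_&Hd&_) x. apply is_derive_Reals. apply Derive_correct. auto. Qed.

Lemma T_exists f c eta v : standing_assumptions f -> 0 < c -> c < cs f -> TW_solution f c eta v ->
  exists T, 0 <= T /\ Derive eta T = 0 /\ forall t, T < t -> Derive eta t < 0.
Proof.
  intros Hs Hc Hcc HTW.
  pose proof (a_pos f c Hs Hc Hcc) as [Ha Ha'].
  destruct (eta_decay f c eta v HTW _ Ha) as [R HR].
  assert (Hnz : forall t, R <= t -> Derive eta t <> 0).
  { intros t Ht H0. specialize (HR t Ht). apply Rabs_lt_between in HR.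
    pose proof (eta_pos f c eta v Hs Hc Hcc HTW t).
    pose proof (G_pos f c (eta t) Hs Hc Hcc (Rgt_not_eq _ _ H) ltac:(lra)).
    rewrite <- (G_eq f c eta v Hs HTW), H0 in H1. lra. }
  pose proof (Rmax_l R 0). pose proof (Rmax_r R 0). set (R' := Rmax R 0) in *.
  set (W := fun t => 0 <= t <= R' /\ Derive eta t = 0).
  assert (HW : bound W) by (exists R'; intros x [Hx _]; lra).
  pose proof (deriv0 f c eta v HTW) as Hd0.
  assert (HW0 : W 0) by (unfold W; split; [lra| auto]).
  destruct (completeness W HW (ex_intro _ 0 HW0)) as [T HT].
  pose proof HTW as (_&Hd2&_).
  destruct (lub_zero (Derive eta) 0 0 R' T Hd2 HT Hd0 ltac:(lra)) as [HdT HTr].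
  assert (Hnz2 : forall t, T < t -> Derive eta t <> 0).
  { intros t Ht Hz0. destruct (Rle_dec t R').
    - assert (t <= T) by (apply (proj1 HT); split; [lra|auto]). lra.
    - apply (Hnz t). unfold R' in *. lra. auto. }
  exists T. split; [lra|]. split; auto.
  intros t Ht. apply Rnot_le_lt. intro Hpos.
  assert (Hp : 0 < Derive eta t) by (destruct Hpos; auto; exfalso; apply (Hnz2 t Ht); auto).
  pose proof (eta_pos f c eta v Hs Hc Hcc HTW t) as Hpt.
  destruct (eta_decay f c eta v HTW _ Hpt) as [R2 HR2].
  set (s := Rmax R2 t + 1). pose proof (Rmax_l R2 t). pose proof (Rmax_r R2 t).
  destruct (MVT_cor2 eta (Derive eta) t s ltac:(unfold s; lra)) as [xi [Hxi Hxir]].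
  { intros; apply (eta_dpl f c eta v HTW). }
  assert (Hxp : 0 < Derive eta xi).
  { apply Rnot_le_lt. intro Hn.
    destruct (IVT_gen (Derive eta) t xi 0 (etap_cont f c eta v HTW)) as [y [Hy Hy0]].
    { rewrite Rmin_right, Rmax_left by lra. lra. }
    rewrite Rmin_left, Rmax_right in Hy by lra.
    apply (Hnz2 y); auto. lra. }
  specialize (HR2 s ltac:(unfold s; lra)). apply Rabs_lt_between in HR2.
  assert (0 < Derive eta xi * (s - t)) by (apply Rmult_lt_0_compat; lra). lra.
Qed.

Lemma Gp_K f c s : s < 1 -> Gp f c s =
  4 * (1 - s) * (f (1 - s) - (c * s / (2 * (1 - s)))^2 - c * (c * s / (2 * (1 - s)))) - Gf f c s / (1 - s).
Proof. intros H. unfold Gp, Gf. field. lra. Qed.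

Lemma max_at_0 f c eta v : standing_assumptions f -> 0 < c -> c < cs f -> TW_solution f c eta v ->
  forall x, eta x <= eta 0.
Proof.
  intros Hs Hc Hcc HTW.
  destruct (T_exists f c eta v Hs Hc Hcc HTW) as [T [HT0 [HdT Hneg]]].
  set (es := eta T).
  pose proof (eta_lt1 _ _ _ _ HTW T) as Hes1.
  assert (HGes : Gf f c es = 0) by (unfold es; rewrite <- (G_eq f c eta v Hs HTW), HdT; ring).
  assert (Hdec : forall a b, T <= a < b -> eta b < eta a).
  { intros a b Hab. destruct (MVT_cor2 eta (Derive eta) a b ltac:(lra)) as [xi [Hxi Hxir]].
    { intros; apply (eta_dpl f c eta v HTW). }
    specialize (Hneg xi ltac:(lra)). assert (Derive eta xi * (b - a) < 0).
    { apply Rmult_neg_pos; lra || (apply Rlt_gt; lra). } lra. }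
  assert (HposG : forall s, 0 < s < es -> 0 < Gf f c s).
  { intros s Hs0. destruct (eta_decay f c eta v HTW s ltac:(lra)) as [R HR].
    set (b := Rmax R T + 1). pose proof (Rmax_l R T). pose proof (Rmax_r R T).
    specialize (HR b ltac:(unfold b; lra)). apply Rabs_lt_between in HR.
    destruct (IVT_gen eta T b s (eta_cont f c eta v HTW)) as [t [Ht Hts]].
    { rewrite Rmin_right, Rmax_left by (unfold es in *; lra). unfold es in *. lra. }
    rewrite Rmin_left, Rmax_right in Ht by (unfold b; lra).
    assert (T < t) by (destruct (Req_dec T t); [subst; unfold es in *; lra| lra]).
    specialize (Hneg t H1). rewrite <- Hts, <- (G_eq f c eta v Hs HTW). nra. }
  assert (HGp : Gp f c es <> 0).
  { intro H0. apply (never_eq f c eta v es Hs HTW Hes1 HGes H0 T). reflexivity. }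
  assert (Hsec : Derive (Derive eta) T = Gp f c es / 2).
  { rewrite (ode_eq f c eta v HTW T), HdT, (Gp_K f c es Hes1), HGes. unfold es. field. lra. }
  pose proof (etap_dpl f c eta v HTW T) as Hdl.
  assert (Hneg2 : Derive (Derive eta) T < 0).
  { destruct (Rtotal_order (Derive (Derive eta) T) 0) as [h|[h|h]]; auto.
    - exfalso. rewrite Hsec in h. apply HGp. lra.
    - exfalso. destruct (Hdl (Derive (Derive eta) T / 2) ltac:(lra)) as [d Hd].
      simpl in Hd. pose proof (cond_pos d).
      specialize (Hd (d/2) ltac:(lra) ltac:(rewrite Rabs_right; lra)).
      rewrite HdT, Rminus_0_r in Hd. apply Rabs_lt_between in Hd.
      specialize (Hneg (T + d/2) ltac:(lra)).
      assert (Derive eta (T + d/2) / (d/2) < 0).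
      { unfold Rdiv. apply Rmult_neg_pos. auto. apply Rinv_0_lt_compat. lra. }
      lra. }
  destruct (Hdl (- Derive (Derive eta) T / 2) ltac:(lra)) as [d Hd].
  simpl in Hd. pose proof (cond_pos d) as Hdp.
  assert (Hleftd : forall t, T - d < t < T -> 0 < Derive eta t).
  { intros t Ht. specialize (Hd (t - T) ltac:(lra) ltac:(rewrite Rabs_left; lra)).
    rewrite HdT, Rminus_0_r in Hd. replace (T + (t - T)) with t in Hd by ring.
    apply Rabs_lt_between in Hd.
    assert (Hq : Derive eta t / (t - T) < 0) by lra.
    apply Rnot_le_lt. intro Hn.
    assert (0 <= Derive eta t / (t - T)).
    { unfold Rdiv. replace (Derive eta t * / (t - T)) with ((- Derive eta t) * / (T - t)) by (field; lra).
      apply Rmult_le_pos. lra. left; apply Rinv_0_lt_compat; lra. }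
    lra. }
  assert (Hleft : forall t, T - d < t < T -> eta t < es).
  { intros t Ht. destruct (MVT_cor2 eta (Derive eta) t T ltac:(lra)) as [xi [Hxi Hxir]].
    { intros; apply (eta_dpl f c eta v HTW). }
    specialize (Hleftd xi ltac:(lra)). unfold es.
    assert (0 < Derive eta xi * (T - t)) by (apply Rmult_lt_0_compat; lra). lra. }
  assert (Hmain : forall x, 0 <= x -> eta x <= es).
  { intros x Hx. destruct (Rle_dec T x) as [h|h].
    - destruct (Req_dec T x). subst x. unfold es; lra. left. apply Hdec. lra.
    - apply Rnot_lt_le. intro Hgt.
      destruct (Rlt_le_dec (T - d) x) as [h2|h2].
      + specialize (Hleft x ltac:(lra)). lra.
      + destruct (continuity_ab_min eta x T ltac:(lra)) as [m [Hm Hmr]].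
        { intros; apply eta_cont with f c v; auto. }
        assert (Hp : eta (T - d/2) < es) by (apply Hleft; lra).
        assert (Hmp : eta m <= eta (T - d/2)) by (apply Hm; lra).
        assert (Hmx : x < m) by (destruct (Req_dec x m); [subst; lra| lra]).
        assert (HmT : m < T) by (destruct (Req_dec m T); [subst; unfold es in *; lra| lra]).
        assert (Hd0 : Derive eta m = 0).
        { pose (pr := exist (fun l => derivable_pt_lim eta m l) (Derive eta m) (eta_dpl f c eta v HTW m) : derivable_pt eta m).
          change (derive_pt eta m pr = 0). apply (deriv_minimum eta x T m pr Hmx HmT).
          intros y Hy1 Hy2. apply Hm. lra. }
        pose proof (eta_pos f c eta v Hs Hc Hcc HTW m).
        specialize (HposG (eta m) ltac:(lra)).
        rewrite <- (G_eq f c eta v Hs HTW), Hd0 in HposG. lra. }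
  destruct (eta0_pos f c eta v Hs Hc Hcc HTW) as [He0 HG0].
  assert (Hge : es <= eta 0).
  { apply Rnot_lt_le. intro Hl. specialize (HposG (eta 0) ltac:(lra)). lra. }
  pose proof (Hmain 0 (Rle_refl 0)).
  pose proof HTW as (_&_&_&_&_&_&_&Hev&_).
  intro x. destruct (Rle_dec 0 x).
  - pose proof (Hmain x r). lra.
  - rewrite <- Hev. pose proof (Hmain (- x) ltac:(lra)). lra.
Qed.

Lemma c_pos f (c : R) : Rbar_lt (c0 f) c -> 0 < c.
Proof.
  intros H. unfold c0 in H.
  destruct (Glb_Rbar_correct (fun c => 0 < c < cs f /\ has_TW f c)) as [_ Hg].
  assert (Hl : Rbar_le (Finite 0) (Glb_Rbar (fun c => 0 < c < cs f /\ has_TW f c))).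
  { apply Hg. intros x [[Hx _] _]. simpl. lra. }
  pose proof (Rbar_le_lt_trans _ _ (Finite c) Hl H). simpl in H0. exact H0.
Qed.

Theorem mainTheorem4 (f : R -> R) :
  standing_assumptions f ->
  exists delta, 0 < delta < 1 /\
    forall (c : R) (eta v : R -> R),
      Rbar_lt (c0 f) c -> c < cs f ->
      TW_solution f c eta v ->
      (forall x, eta x <= eta 0) /\
      eta 0 <= 1 - delta ^ 2 * c ^ 2 / (cs f) ^ 2.
Proof.
  intros Hs.
  destruct (F_bound f Hs) as [B [HB HFB]].
  pose proof (cs_sq f Hs) as [_ Hcs].
  set (d := Rmin (1/2) ((cs f)^2 / (16 * B))).
  assert (Hd1 : d <= 1/2) by apply Rmin_l.
  assert (Hd2 : d <= (cs f)^2 / (16 * B)) by apply Rmin_r.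
  assert (Hd0 : 0 < d) by (unfold d; apply Rmin_case; [lra| apply Rdiv_lt_0_compat; nra]).
  exists (sqrt d). split. split. apply sqrt_lt_R0; lra.
  rewrite <- sqrt_1. apply sqrt_lt_1_alt. lra.
  intros c eta v Hc0 Hcc HTW.
  pose proof (c_pos f c Hc0) as Hc.
  split. apply (max_at_0 f c eta v Hs Hc Hcc HTW).
  rewrite pow2_sqrt by lra.
  destruct (eta0_pos f c eta v Hs Hc Hcc HTW) as [He0 HG0].
  pose proof (eta_lt1 _ _ _ _ HTW 0) as He1.
  pose proof (a_pos f c Hs Hc Hcc) as [Ha Ha'].
  assert (Hr : d * c^2 / (cs f)^2 = d * (c^2/(cs f)^2)) by (field; lra).
  rewrite Hr.
  destruct (Rle_dec (eta 0) (1/2)).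
  - assert (d * (c^2/(cs f)^2) <= d) by nra. lra.
  - unfold Gf in HG0.
    assert (HF : Fpot f (1 - eta 0) <= B) by (apply HFB; lra).
    assert (Hq : c^2 / 4 <= 4 * (1 - eta 0) * B).
    { assert (4 * (1 - eta 0) * Fpot f (1 - eta 0) <= 4 * (1 - eta 0) * B) by (apply Rmult_le_compat_l; lra).
      assert (1/4 <= eta 0 ^ 2) by nra. assert (c^2 * (1/4) <= c^2 * eta 0 ^2) by (apply Rmult_le_compat_l; nra). lra. }
    assert (Hq2 : c^2 / (16 * B) <= 1 - eta 0).
    { apply (Rmult_le_reg_r (16 * B)). lra. replace (c^2/(16*B) * (16*B)) with (c^2) by (field; lra). lra. }
    assert (d * (c^2/(cs f)^2) <= (cs f)^2 / (16 * B) * (c^2/(cs f)^2)) by nra.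
    replace ((cs f)^2 / (16 * B) * (c^2/(cs f)^2)) with (c^2/(16*B)) in H by (field; lra).
    lra.
Qed.
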